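(* Let $(X,\|\cdot\|)$ be a Banach space, let $C$ be a closed subspace of $X$, and let $T:C\to C$ be a mapping. Assume there exist two altering distance functions $\phi,\psi:[0,\infty)\to[0,\infty)$ such that for all $x,y\in C$: (i) $\phi(\|Tx-Ty\|)\le\phi(\|x-y\|)-\psi(\|x-y\|)$; (ii) $\phi(\|Tx-y\|)\le\phi(\|x-y\|)-\psi(\|x-y\|)$. Then the null vector $\theta$ of $X$ is the only fixed point of $T$.
   Context: A function $\varphi:[0,\infty)\to[0,\infty)$ is called an altering distance function if (i) $\varphi$ is monotone increasing and continuous, and (ii) $\varphi(t)=0$ if and only if $t=0$. *)

(* Defs.v *)
From HB Require Import structures.
From mathcomp Require Import all_boot all_order all_algebra.
From mathcomp Require Import all_classical all_reals all_analysis.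
Set Implicit Arguments. Unset Strict Implicit. Unset Printing Implicit Defensive.
Import Order.TTheory GRing.Theory Num.Theory.
Import numFieldNormedType.Exports.
Local Open Scope classical_set_scope.
Local Open Scope ring_scope.

(* An altering distance function phi : [0,oo) -> [0,oo), represented as a
   function R -> R whose behaviour is only constrained on [0,oo). *)
Definition altering_distance {R : realType} (phi : R -> R) : Prop :=
  (forall t, 0 <= t -> 0 <= phi t) /\
  (forall s t, 0 <= s -> s <= t -> phi s <= phi t) /\
  {within `[0, +oo[, continuous phi} /\
  (forall t, 0 <= t -> (phi t = 0 <-> t = 0)).

Definition linear_subspace {R : realType} {X : normedModType R} (C : set X) : Prop :=
  C 0 /\ (forall x y, C x -> C y -> C (x + y)) /\
  (forall (a : R) x, C x -> C (a *: x)).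

(* Main.v *)
Require Import Defs.
From HB Require Import structures.
From mathcomp Require Import all_boot all_order all_algebra.
From mathcomp Require Import all_classical all_reals all_analysis.
From mathcomp Require Import lra.
Import Order.TTheory GRing.Theory Num.Theory.
Import numFieldNormedType.Exports.
Local Open Scope classical_set_scope.
Local Open Scope ring_scope.

Theorem theorem2p3 (R : realType) (X : completeNormedModType R)
  (C : set X) (T : X -> X) (phi psi : R -> R) :
  linear_subspace C -> closed C ->
  (forall x, C x -> C (T x)) ->
  altering_distance phi -> altering_distance psi ->
  (forall x y, C x -> C y ->
     phi `|T x - T y| <= phi `|x - y| - psi `|x - y|) ->
  (forall x y, C x -> C y ->
     phi `|T x - y| <= phi `|x - y| - psi `|x - y|) ->
  T 0 = 0 /\ (forall x, C x -> T x = x -> x = 0).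
Proof.
move=> [C0 _] _ _ [p0 [_ [_ pz]]] [q0 [_ [_ qz]]] Hi Hii.
have fix1 : forall x, C x -> T x = x.
  move=> x Cx; have := Hii x x Cx Cx.
  rewrite subrr normr0.
  have -> : phi 0 = 0 by apply/(pz 0 (lexx 0)).
  have -> : psi 0 = 0 by apply/(qz 0 (lexx 0)).
  rewrite subrr => h.
  have e : phi `|T x - x| = 0 by apply/le_anti; rewrite h p0.
  move/(pz _ (normr_ge0 _)): e => /normr0_eq0 /eqP; rewrite subr_eq0 => /eqP.
  done.
split; first exact: fix1.
move=> x Cx _; have := Hi x 0 Cx C0.
rewrite (fix1 x Cx) (fix1 0 C0) => h.
have hp : psi `|x - 0| <= 0.
  move: h; set a := phi _; set b := psi _ => h; lra.
have e : psi `|x - 0| = 0 by apply/le_anti; rewrite hp /=; apply: q0.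
by move/(qz _ (normr_ge0 _)): e => /normr0_eq0; rewrite subr0.
Qed.
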